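(* Let $n$ be an odd integer with $n>1$, and let $\mathcal{A}=(Q,A,\delta,q_0,F)$ be a circular semi-flower automaton with $|Q|=n$. Let $b\in A$. If the cycle formed by the $b$-edges of $\mathcal{A}$ has length $2$, then $\mathcal{A}$ is synchronizing.
   Context: An automaton over a finite alphabet $A$ is a quintuple $\mathcal{A}=(Q,A,\delta,q_0,F)$ with $Q$ a non-empty finite set of states, initial state $q_0\in Q$, set of final states $F\subseteq Q$, and total transition function $\delta:Q\times A\to Q$, extended to words in the usual way; each letter thus induces a transformation of $Q$. Its digraph has vertex set $Q$ and, for each $p\in Q$, $a\in A$, an edge labeled $a$ (an $a$-edge) from $p$ to $\delta(p,a)$. A path is an alternating sequence of distinct vertices and edges, each edge going from the preceding vertex to the next; a cycle is a path with at least one edge whose initial and terminal vertices coincide. A state $q$ is accessible if there is a path from $q_0$ to $q$, and co-accessible if there is a path from $q$ to a final state. $\mathcal{A}$ is a semi-flower automaton if $F=\{q_0\}$, every state is accessible and co-accessible, and every cycle passes through $q_0$. $\mathcal{A}$ is circular if some letter induces a circular permutation (a single cycle of length $|Q|$) on $Q$. In a semi-flower automaton, the sub-digraph formed by the $b$-edges (for a fixed letter $b$) contains exactly one cycle, called the $b$-cycle. $\mathcal{A}$ is synchronizing if there is a word $w\in A^*$ such that $\{\delta(q,w): q\in Q\}$ is a singleton. *)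

(* Defs.v *)
From mathcomp Require Import all_boot.
Set Implicit Arguments. Unset Strict Implicit. Unset Printing Implicit Defensive.

(* An automaton (Q, A, delta, q0, F) is given by its components:
   Q A : finType, delta : Q -> A -> Q (total), q0 : Q, F : {set Q}. *)
Section Automata.
Variables (Q A : finType) (delta : Q -> A -> Q).

Fixpoint delta_star (q : Q) (w : seq A) : Q :=
  if w is a :: w' then delta_star (delta q a) w' else q.

Fixpoint trace (q : Q) (w : seq A) : seq Q :=
  if w is a :: w' then q :: trace (delta q a) w' else [:: q].

Definition is_path (p : Q) (w : seq A) (r : Q) : bool :=
  uniq (trace p w) && (delta_star p w == r).

(* a cycle: at least one edge, initial = terminal vertex, and the other
   vertices are pairwise distinct *)
Definition is_cycle (p : Q) (w : seq A) : bool :=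
  [&& w != [::], delta_star p w == p & uniq (take (size w) (trace p w))].

Definition accessible (q0 q : Q) : Prop := exists w, is_path q0 w q.

Definition coaccessible (F : {set Q}) (q : Q) : Prop :=
  exists w f, f \in F /\ is_path q w f.

Definition semi_flower (q0 : Q) (F : {set Q}) : Prop :=
  [/\ F = [set q0],
      forall q, accessible q0 q,
      forall q, coaccessible F q &
      forall p w, is_cycle p w -> q0 \in trace p w].

(* the letter a induces a circular permutation (one cycle of length |Q|) *)
Definition circular_letter (a : A) : Prop :=
  injective (fun q => delta q a) /\ forall q, order (fun x => delta x a) q = #|Q|.

Definition circular : Prop := exists a, circular_letter a.

Definition synchronizing : Prop :=
  exists w : seq A, exists p : Q, [set delta_star q w | q : Q] = [set p].

End Automata.

(* Main.v *)
Require Import Defs.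
From mathcomp Require Import all_boot.
Set Implicit Arguments. Unset Strict Implicit. Unset Printing Implicit Defensive.

Section Aux.
Variables (Q A : finType) (delta : Q -> A -> Q).

Lemma ds_cat q w1 w2 : delta_star delta q (w1 ++ w2) = delta_star delta (delta_star delta q w1) w2.
Proof. by elim: w1 q => //= c w IH q. Qed.

Lemma ds_nseq q m c : delta_star delta q (nseq m c) = iter m (fun z => delta z c) q.
Proof. by elim: m q => //= m IH q; rewrite IH -iterSr. Qed.

Lemma trace_nseq q m c : trace delta q (nseq m c) = traject (fun z => delta z c) q m.+1.
Proof. by elim: m q => //= m IH q; rewrite IH. Qed.

End Aux.

Theorem mainTheorem3 (n : nat) (Q A : finType) (delta : Q -> A -> Q)
    (q0 : Q) (F : {set Q}) (b : A) :
  odd n -> 1 < n -> #|Q| = n ->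
  semi_flower delta q0 F ->
  circular delta ->
  (* the b-cycle has length 2: some cycle consisting of b-edges has 2 edges *)
  (exists q : Q, is_cycle delta q [:: b; b]) ->
  synchronizing delta.
Proof.
move=> oddn _ cardQ [_ _ _ cyc] [a [finj ford]] [q cq].
set g := fun z => delta z b.
set f := fun z => delta z a.
have [gq q_gq] : g (g q) = q /\ q != g q.
  have := cq; rewrite /is_cycle => /and3P[_ /eqP E H]; split; first exact: E.
  by move: H => /=; rewrite inE andbT.
set r := g q0.
have [gr rq0] : g r = q0 /\ r != q0.
  have := cyc _ _ cq; rewrite /= !inE => /or3P[] /eqP E; rewrite /r E.
  - by rewrite gq eq_sym.
  - by rewrite gq.
  - have gq2 : delta (delta q b) b = q := gq. by rewrite gq2 gq eq_sym.
have inS m : iter m g q0 \in [:: q0; r].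
  elim: m => [|m IH]; first by rewrite inE eqxx.
  rewrite iterS; move: IH; rewrite !inE => /orP[] /eqP ->.
    by rewrite /r eqxx orbT.
  by rewrite gr eqxx.
have reach x : exists2 i, i <= n & iter i g x = q0.
  have lo := looping_order g x.
  move: lo; rewrite /looping => /trajectP[j ltj Ej].
  set k := order g x in ltj Ej.
  set L := k - j.
  have kE : k = j + L by rewrite /L subnKC // ltnW.
  set y := iter j g x.
  have cy : is_cycle delta y (nseq L b).
    apply/and3P; split.
    - by rewrite -size_eq0 size_nseq /L subn_eq0 -ltnNge.
    - rewrite ds_nseq -/g /y -iterD addnC -kE Ej //.
    - rewrite trace_nseq take_traject ?size_nseq // -/g.
      have := orbit_uniq g x; rewrite /orbit -/k kE trajectD cat_uniq.
      by case/and3P.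
  have := cyc _ _ cy; rewrite trace_nseq -/g => /trajectP[i ltiL ->].
  exists (i + j); last by rewrite /y iterD.
  rewrite -cardQ; apply: leq_trans (max_card (fconnect g x)).
  rewrite -/(order g x) -/k kE addnC leq_add2l; by [].
set pi := fun x => iter n g x.
have piS x : pi x \in [:: q0; r].
  have [i lein Ei] := reach x.
  by rewrite /pi -(subnK lein) iterD Ei inS.
have allorb y : exists k, y = iter k f q0.
  have : fconnect f q0 y.
    have := @subset_cardP _ (fconnect f q0) predT.
    rewrite -/(order f q0) ford.
    move=> /(_ erefl) H.
    by have := H (subset_predT _) y; rewrite !inE.  
  rewrite fconnect_orbit => /trajectP[k _ ->]; by exists k.
have [p Ep] := allorb r.
set h := iter p f.
have fn x : iter n f x = x by rewrite -cardQ -(ford x) iter_order.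
have hn x : iter n h x = x.
  rewrite /h -iterM mulnC iterM.
  exact: iter_fix (fn x).
have rq1 : (q0 == r) = false by rewrite eq_sym (negbTE rq0).
have rq2 : (r == q0) = false by rewrite (negbTE rq0).
have [x Ex] : exists x, pi (h x) = pi x.
  case: (pickP (fun x => pi (h x) == pi x)) => [x /eqP E|H]; first by exists x.
  have par k : (pi (iter k h q0) == pi q0) = ~~ odd k.
    elim: k => [|k IH]; first by rewrite eqxx.
    rewrite iterS /=.
    have Hu := H (iter k h q0); move: IH Hu.
    have := piS (iter k h q0); have := piS (h (iter k h q0)); have := piS q0.
    rewrite !inE => /orP[]/eqP-> /orP[]/eqP-> /orP[]/eqP->;
      rewrite ?eqxx ?rq1 ?rq2 //; by case: (odd k).
  by have := par n; rewrite hn eqxx oddn.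
have [k Ek] := allorb x.
exists (nseq n b ++ nseq k a ++ nseq n b), (pi x).
apply/setP => z; rewrite inE.
have val y : delta_star delta y (nseq n b ++ nseq k a ++ nseq n b) = pi x.
  rewrite !ds_cat !ds_nseq -/g -/f -/(pi y).
  have := piS y; rewrite !inE => /orP[]/eqP->.
    by rewrite -Ek.
  by rewrite Ep -iterD addnC iterD -Ek; exact: Ex.
apply/imsetP/eqP => [[y _ ->]|->]; first exact: val.
by exists q0 => //; rewrite val.
Qed.
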